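(* Let $r,n,k$ be positive integers with $k\geq 2$, $n\in F_r$, and $\omega(n)\geq k$. Then $Q_{k-1}(n)>\lambda_k(r)\,(P_k(n)-r)$.
   Context: For a positive integer $r$, $S_r$ is the multiplicative arithmetic function with $S_r(p^{\alpha})=0$ if $p\leq r$ and $S_r(p^{\alpha})=p^{\alpha-1}(p-r)$ if $p>r$, for all primes $p$ and positive integers $\alpha$. $B_r=\{n\in\mathbb{N}: S_r(n)>0\}$ (positive integers whose smallest prime factor exceeds $r$, together with $1$). $F_r$ is the set of $n\in B_r$ such that $S_r(n)<S_r(m)$ for all $m\in B_r$ with $m>n$. $\omega(n)$ is the number of distinct prime factors of $n$. $P_k(n)$ is the $k$-th largest prime divisor of $n$, and $Q_k(n)$ is the $k$-th smallest prime that is larger than $r$ and does not divide $n$. $r\#$ is the product of all primes $\leq r$ (with $1\#=1$). The Jacobsthal function $J(m)$ is the smallest positive integer $a$ such that every set of $a$ consecutive integers contains an element coprime to $m$; $J_r=J(r\#)$. $\lambda_k(r)$ is the unique positive real root of $\frac{J_r}{r}x^k+kx-(k-1)$. *)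

(* Defs.v *)
From mathcomp Require Import all_boot all_order all_algebra.
From mathcomp Require Import boolp reals.
From mathcomp Require Import zify.
Set Implicit Arguments. Unset Strict Implicit. Unset Printing Implicit Defensive.
Import Order.TTheory GRing.Theory Num.Theory.

Definition S (r n : nat) : nat :=
  \prod_(p <- primes n) (if p <= r then 0 else p ^ (logn p n).-1 * (p - r)).

Definition inB (r n : nat) : bool := (0 < n) && (0 < S r n).

Definition inF (r n : nat) : Prop :=
  inB r n /\ forall m, inB r m -> n < m -> S r n < S r m.

Definition omega (n : nat) : nat := size (primes n).

(* k-th largest prime divisor (k >= 1) *)
Definition P (k n : nat) : nat := nth 0 (rev (primes n)) k.-1.

Definition goodQ (r n p : nat) : bool := [&& prime p, r < p & ~~ (p %| n)].

Lemma Q_ex (r n k : nat) : 0 < n -> exists q, k <= count (goodQ r n) (iota 0 q.+1).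
Proof.
move=> n0; elim: k => [|k [q Hq]]; first by exists 0.
have [p ltp pp] := prime_above (maxn q (maxn r n)).
exists p.
have hqp : q < p by move: ltp; rewrite !gtn_max => /andP[-> _].
have gp : goodQ r n p.
  move: ltp; rewrite !gtn_max => /andP[_ /andP[hr hn]].
  rewrite /goodQ pp hr /=; apply/negP => /(dvdn_leq n0); lia.
have -> : iota 0 p.+1 = iota 0 q.+1 ++ iota q.+1 (p - q).
  by rewrite -iotaD; congr iota; lia.
rewrite count_cat.
have : 0 < count (goodQ r n) (iota q.+1 (p - q)).
  rewrite -has_count; apply/hasP; exists p => //.
  rewrite mem_iota; lia.
lia.
Qed.

(* Q_k(n) : k-th smallest prime > r not dividing n (defined for n > 0, k >= 1). *)
Definition Q (r n k : nat) : nat :=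
  match (0 < n) as b return (0 < n) = b -> nat with
  | true => fun h => ex_minn (Q_ex r k h)
  | false => fun _ => 0
  end erefl.

Definition primorial (r : nat) : nat := \prod_(p < r.+1 | prime p) p.

Lemma primorial_gt0 r : 0 < primorial r.
Proof. rewrite /primorial; elim/big_ind: _ => // [x y|i /prime_gt0 //]; by rewrite muln_gt0 => -> ->. Qed.

Definition jac_ok (m a : nat) : Prop :=
  forall x : int, exists2 i : nat, i < a & coprimez (x + i%:Z)%R m%:Z.

Lemma jac_ex (m : nat) : 0 < m -> exists a, (0 < a) && `[< jac_ok m a >].
Proof.
move=> m0; exists m; rewrite m0 /=; apply/asboolP => x.
have mz : (m%:Z != 0)%R by rewrite eqz_nat -lt0n.
exists `|((1 - x) %% m%:Z)%Z|%N.
  rewrite -(ltz_nat) gez0_abs ?modz_ge0 // ltz_pmod //.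
rewrite gez0_abs ?modz_ge0 //.
rewrite /coprimez -gcdz_modl modzDmr.
by rewrite GRing.addrC GRing.subrK gcdz_modl gcdzC gcdz1.
Qed.

Definition J (m : nat) : nat :=
  match (0 < m) as b return (0 < m) = b -> nat with
  | true => fun h => ex_minn (jac_ex h)
  | false => fun _ => 0
  end erefl.

Definition Jr (r : nat) : nat := J (primorial r).

(* Main.v *)
Require Import Defs.
From mathcomp Require Import all_boot all_order all_algebra.
From mathcomp Require Import reals.
From mathcomp Require Import boolp sequences exp.
From mathcomp Require Import zify ring lra.
Import Order.TTheory GRing.Theory Num.Theory.
Set Implicit Arguments. Unset Strict Implicit. Unset Printing Implicit Defensive.

Section Core.
Local Open Scope ring_scope.


Lemma core1 (R : realType) (K : nat) (u lam mu : R) :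
  0 <= u -> u <= 1 -> 0 <= lam -> 0 <= mu -> mu = K%:R - K.+1%:R * lam ->
  (1 - u) ^+ K * ((1 + lam * u) ^+ K.+1 + mu * u) <= 1.
Proof.
move=> u0 u1 l0 m0 hmu.
have lu0 : 0 <= lam * u by rewrite mulr_ge0.
have mu0 : 0 <= mu * u by rewrite mulr_ge0.
have e1 : 1 <= (1 + lam * u) ^+ K.+1 by apply: exprn_ege1; lra.
have h1 : (1+lam*u)^+K.+1 + mu*u <= (1+lam*u)^+K.+1 * (1 + mu*u).
  rewrite mulrDr mulr1 lerD2l -{1}(mul1r (mu*u)); exact: ler_wpM2r.
have h2 : (1+lam*u)^+K.+1 * (1+mu*u) <= expR(lam*u)^+K.+1 * expR(mu*u).
  apply: ler_pM; [lra|lra| |exact: expR_ge1Dx].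
  apply: lerXn2r; rewrite ?nnegrE; [lra| exact: expR_ge0| exact: expR_ge1Dx].
have h3 : (1-u)^+K <= expR(-u)^+K.
  apply: lerXn2r; rewrite ?nnegrE; [lra| exact: expR_ge0|].
  have := expR_ge1Dx (-u); lra.
apply: le_trans (_ : expR (-u) ^+ K * (expR (lam * u) ^+ K.+1 * expR (mu * u)) <= 1).
  apply: ler_pM; [apply: exprn_ge0; lra| lra | exact: h3 | exact: le_trans h1 h2].
rewrite -!expRM_natl -!expRD hmu.
have -> : K%:R * - u + (K.+1%:R * (lam * u) + (K%:R - K.+1%:R * lam) * u) = 0 :> R by ring.
by rewrite expR0.
Qed.


Lemma core2 (R : realType) (K : nat) (r p Q J lam A B C D : R) :
 0 < r -> r < p -> r < Q -> 0 < lam -> 0 < B -> 0 <= A -> 0 <= D -> 0 <= J ->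
 J / r * lam ^+ K.+1 + K.+1%:R * lam - K%:R = 0 ->
 Q <= lam * (p - r) ->
 A * (p - r) ^+ K.+1 <= C * p ^+ K.+1 ->
 D * Q ^+ K <= B * (Q - r) ^+ K ->
 D <= (Q - r) ^+ K ->
 (p - r) ^+ K.+1 <= C ->
 (A / B + J) * D <= C.
Proof.
move=> r0 rp rQ l0 B0 A0 D0 J0 heq hQ hA hD hD' hC.
have Q0 : 0 < Q by lra.
have Y0 : 0 < p - r by lra.
have C0 : 0 < C by apply: lt_le_trans hC; rewrite exprn_gt0.
set u := r / Q.
have u0 : 0 <= u by rewrite divr_ge0 // ltW.
have u1 : u <= 1 by rewrite ler_pdivrMr // mul1r ltW.
have e1u : 1 - u = (Q - r) / Q by rewrite /u; field; lra.
set mu := J / r * lam ^+ K.+1.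
have mu0 : 0 <= mu by rewrite mulr_ge0 ?divr_ge0 ?exprn_ge0 // ltW.
have hmu : mu = K%:R - K.+1%:R * lam by rewrite /mu; lra.
have hcore := @core1 R K u lam mu u0 u1 (ltW l0) mu0 hmu.
have s1a : D / B <= (1 - u) ^+ K.
  rewrite ler_pdivrMr // e1u expr_div_n mulrAC ler_pdivlMr ?exprn_gt0 //.
  by rewrite [_ * B]mulrC.
have s1b : A <= C * (1 + lam * u) ^+ K.+1.
  have : A <= C * (p / (p - r)) ^+ K.+1.
    by rewrite expr_div_n mulrA ler_pdivlMr ?exprn_gt0.
  move/le_trans; apply; apply: ler_wpM2l; first lra.
  apply: lerXn2r; rewrite ?nnegrE; first by rewrite divr_ge0; lra.
    by rewrite addr_ge0 // mulr_ge0 // ltW.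
  have -> : p / (p - r) = 1 + r / (p - r) by field; lra.
  rewrite lerD2l /u mulrA ler_pdivrMr // mulrAC ler_pdivlMr //.
  by rewrite [lam * r]mulrC -mulrA ler_pM2l.
have s1 : A / B * D <= C * (1 + lam * u) ^+ K.+1 * (1 - u) ^+ K.
  rewrite -mulrA [B^-1 * D]mulrC; apply: ler_pM => //; rewrite divr_ge0 // ltW //.
have s2 : J * D <= C * (mu * u) * (1 - u) ^+ K.
  apply: le_trans (_ : J * (Q - r) ^+ K <= _); first by apply: ler_wpM2l.
  rewrite e1u expr_div_n.
  have -> : C * (mu * u) * ((Q - r) ^+ K / Q ^+ K)
     = J * (Q - r) ^+ K * (C * lam ^+ K.+1 / Q ^+ K.+1).
    rewrite /mu /u !exprS; set X := Q ^+ K; set Z := (Q - r) ^+ K; set L := lam ^+ K.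
    have X0 : X != 0 by rewrite expf_neq0 // gt_eqF.
    by field; rewrite X0 !gt_eqF.
  rewrite -[X in X <= _]mulr1; apply: ler_wpM2l.
    by rewrite mulr_ge0 // exprn_ge0 // subr_ge0 ltW.
  rewrite ler_pdivlMr ?exprn_gt0 // mul1r.
  apply: le_trans (_ : (lam * (p - r)) ^+ K.+1 <= _).
    by apply: lerXn2r; rewrite ?nnegrE; [lra | apply: mulr_ge0; lra | exact: hQ].
  by rewrite exprMn mulrC ler_wpM2r // exprn_ge0 // ltW.
rewrite mulrDl.
apply: le_trans (lerD s1 s2) _.
have -> : C * (1 + lam * u) ^+ K.+1 * (1 - u) ^+ K + C * (mu * u) * (1 - u) ^+ K
   = C * ((1 - u) ^+ K * ((1 + lam * u) ^+ K.+1 + mu * u)) by ring.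
by rewrite -[X in _ <= X]mulr1 ler_wpM2l // ltW.
Qed.

End Core.


Definition T r N q := if q <= r then 0 else q ^ (logn q N).-1 * (q - r).

Lemma SE r N : S r N = \prod_(q <- primes N) T r N q.
Proof. by []. Qed.

Lemma logn_pN q p N : prime p -> 0 < N -> q != p -> logn q (p * N) = logn q N.
Proof. by move=> pp N0 qp; rewrite lognM ?(prime_gt0 pp) // logn_prime // (negbTE qp). Qed.

Lemma S_mulp r p N : prime p -> 0 < N ->
  S r (p * N) = if p <= r then 0 else if p %| N then p * S r N else (p - r) * S r N.
Proof.
move=> pp N0.
have pN0 : 0 < p * N by rewrite muln_gt0 prime_gt0.
have eqT : forall q, q != p -> T r (p * N) q = T r N q.
  by move=> q qp; rewrite /T logn_pN.
case: (boolP (p %| N)) => pN.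
  have pin : p \in primes N by rewrite mem_primes pp N0.
  have hperm : perm_eq (primes (p * N)) (primes N).
    apply: uniq_perm; rewrite ?primes_uniq // => q.
    rewrite !mem_primes pN0 N0 /=; case: (boolP (prime q)) => //= qq.
    rewrite Euclid_dvdM //; case: (boolP (q %| N)) => qN; rewrite ?orbT ?orbF //.
    apply/negP; rewrite dvdn_prime2 // => /eqP qp; by move: qN; rewrite qp pN.
  rewrite !SE (perm_big _ hperm) !(bigD1_seq p) ?primes_uniq //.
  rewrite (eq_bigr (T r N)) => [|q /eqP-/eqP]; last exact: eqT.
  rewrite /T; case: leqP => // _.
  rewrite (lognM _ (prime_gt0 pp) N0) logn_prime // eqxx add1n /=.
  have : 0 < logn p N by rewrite logn_gt0.
  case: (logn p N) => // e _ /=; rewrite expnS; lia.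
have pnin : p \notin primes N by rewrite mem_primes pp N0.
have hperm : perm_eq (primes (p * N)) (p :: primes N).
  apply: uniq_perm; rewrite /= ?pnin ?primes_uniq // => q.
  rewrite in_cons !mem_primes pN0 N0 /=; case: (boolP (prime q)) => //= qq.
  rewrite Euclid_dvdM // dvdn_prime2 //.
  by case: eqP => // qp; rewrite qp pp in qq.
rewrite !SE (perm_big _ hperm) big_cons.
rewrite (eq_big_seq (T r N)) => [|q qin]; last first.
  by apply: eqT; apply: contraNneq pnin => <-.
rewrite /T; case: leqP => // _.
rewrite (lognM _ (prime_gt0 pp) N0) logn_prime // eqxx.
have -> : logn p N = 0 by apply/eqP; rewrite -leqn0 leqNgt logn_gt0.
by rewrite expn0 mul1n.
Qed.

Lemma S_mulp_le r p N : prime p -> 0 < N -> S r (p * N) <= p * S r N.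
Proof.
move=> pp N0; rewrite S_mulp //; case: ifP => // _; case: ifP => // _.
by rewrite leq_mul2r leq_subr orbT.
Qed.

Lemma S_mulp_ge r p N : prime p -> r < p -> 0 < N -> (p - r) * S r N <= S r (p * N).
Proof.
move=> pp rp N0; rewrite S_mulp // (leqNgt p r) rp /=; case: ifP => // _.
by rewrite leq_mul2r leq_subr orbT.
Qed.

Lemma S_mulp_eq r p N : prime p -> r < p -> 0 < N -> ~~ (p %| N) ->
  S r (p * N) = (p - r) * S r N.
Proof. by move=> pp rp N0 pN; rewrite S_mulp // (leqNgt p r) rp /= (negbTE pN). Qed.

Lemma S_le_mul r x N : 0 < x -> 0 < N -> S r (x * N) <= x * S r N.
Proof.
elim/ltn_ind: x => x IH x0 N0.
case: (ltnP 1 x) => hx; last first.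
  have -> : x = 1 by lia.
  by rewrite !mul1n.
have pp := pdiv_prime hx.
have /dvdnP [x' ex] := pdiv_dvd x.
have x'0 : 0 < x' by move: x0; rewrite ex muln_gt0 => /andP[].
have x'x : x' < x by rewrite ex -{1}(muln1 x') ltn_mul2l x'0 prime_gt1.
rewrite ex [x' * _]mulnC -mulnA.
apply: leq_trans (S_mulp_le r pp _) _; first by rewrite muln_gt0 x'0.
rewrite -mulnA leq_mul2l; apply/orP; right; exact: IH.
Qed.

Lemma prod_gt0 (l : seq nat) : all prime l -> 0 < \prod_(x <- l) x.
Proof.
elim: l => [|x l IH]; rewrite ?big_nil ?big_cons //= => /andP[px pl].
by rewrite muln_gt0 prime_gt0 // IH.
Qed.

Lemma S_prod_ge r N ps : 0 < N -> all prime ps -> all (fun x => r < x) ps ->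
  \prod_(x <- ps) (x - r) * S r N <= S r (N * \prod_(x <- ps) x).
Proof.
move=> N0; elim: ps => [|x l IH]; rewrite ?big_nil ?mul1n ?muln1 // !big_cons /=.
move=> /andP[px pl] /andP[rx rl].
rewrite mulnCA -mulnA.
apply: leq_trans (S_mulp_ge px rx _); last by rewrite muln_gt0 N0 prod_gt0.
by rewrite leq_mul2l IH ?orbT.
Qed.

Lemma notdvd_prod q l : prime q -> all prime l -> q \notin l -> ~~ (q %| \prod_(x <- l) x).
Proof.
move=> pq pl ql; rewrite Euclid_dvd_prod // big_has; apply/hasPn => x xl.
rewrite dvdn_prime2 //; last by move/allP: pl; apply.
by apply: contraNneq ql => ->.
Qed.

Lemma S_prod_le r N qs : 0 < N -> uniq qs -> all prime qs -> all (fun x => r < x) qs ->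
  all (fun q => ~~ (q %| N)) qs ->
  S r (N * \prod_(x <- qs) x) <= \prod_(x <- qs) (x - r) * S r N.
Proof.
move=> N0; elim: qs => [|x l IH]; rewrite ?big_nil ?mul1n ?muln1 // !big_cons /=.
move=> /andP[xl ul] /andP[px pl] /andP[rx rl] /andP[xN lN].
rewrite mulnCA S_mulp_eq //; last first.
- by rewrite Euclid_dvdM // negb_or xN notdvd_prod.
- by rewrite muln_gt0 N0 prod_gt0.
by rewrite -mulnA leq_mul2l IH ?orbT.
Qed.

Lemma S_pos r m : 0 < m -> (forall q, prime q -> q %| m -> r < q) -> 0 < S r m.
Proof.
move=> m0 H; rewrite SE big_seq; apply: prodn_cond_gt0 => q.
rewrite mem_primes => /and3P[qp _ qm]; rewrite /T.
have := H q qp qm; case: leqP => // h1 h2.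
by rewrite muln_gt0 expn_gt0 prime_gt0 //= subn_gt0.
Qed.

Lemma inB_prime r n q : inB r n -> prime q -> q %| n -> r < q.
Proof.
move=> /andP[n0 S0] qp qn; rewrite ltnNge; apply/negP => qr.
move: S0; rewrite SE (big_rem q) /=; last by rewrite mem_primes qp n0 qn.
by rewrite /T qr.
Qed.

Lemma prod_primes_dvd (l : seq nat) n : uniq l -> all prime l ->
  all (fun x => x %| n) l -> \prod_(x <- l) x %| n.
Proof.
elim: l => [|x l IH]; rewrite ?big_nil ?dvd1n // big_cons /=.
move=> /andP[xl ul] /andP[px pl] /andP[xn ln].
rewrite Gauss_dvd ?xn ?IH // prime_coprime //; exact: notdvd_prod.
Qed.

Lemma listprod_le (l : seq nat) (F G : nat -> nat) c d :
  (forall x, x \in l -> F x * c <= G x * d) ->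
  \prod_(x <- l) F x * c ^ size l <= \prod_(x <- l) G x * d ^ size l.
Proof.
elim: l => [|x l IH] H; rewrite ?big_nil ?muln1 // !big_cons /= !expnS.
have h1 := H x (mem_head _ _).
have h2 : \prod_(x <- l) F x * c ^ size l <= \prod_(x <- l) G x * d ^ size l.
  by apply: IH => y yl; apply: H; rewrite in_cons yl orbT.
have := leq_mul h1 h2.
by rewrite !mulnA (mulnAC (F x) c) (mulnAC (G x) d) -!mulnA.
Qed.

Lemma Q_spec_aux r n k b (e : (0 < n) = b) : b = true ->
  k <= count (goodQ r n) (iota 0 ((match b as b0 return (0 < n) = b0 -> nat with
  | true => fun h => ex_minn (Q_ex r k h)
  | false => fun _ => 0
  end) e).+1).
Proof. by case: b e => e // _; case: ex_minnP. Qed.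

Lemma Q_spec r n k : 0 < n -> k <= count (goodQ r n) (iota 0 (Q r n k).+1).
Proof. move=> n0; exact: (@Q_spec_aux r n k (0 < n) erefl n0). Qed.

Lemma J_spec_aux m b (e : (0 < m) = b) : b = true ->
  let a := (match b as b0 return (0 < m) = b0 -> nat with
  | true => fun h => ex_minn (jac_ex h)
  | false => fun _ => 0
  end) e in 0 < a /\ jac_ok m a.
Proof.
case: b e => e // _ /=; case: ex_minnP => a /andP[a0 /asboolP ha] _; by split.
Qed.

Lemma J_spec r : 0 < Jr r /\ jac_ok (primorial r) (Jr r).
Proof. exact: (@J_spec_aux (primorial r) (0 < primorial r) erefl (primorial_gt0 r)). Qed.

Lemma coprime_prim r y q : coprime y (primorial r) -> prime q -> q %| y -> r < q.
Proof.
move=> cy pq qy; rewrite ltnNge; apply/negP => qr.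
have qP : q %| primorial r.
  rewrite /primorial (bigD1 (Ordinal (qr : q < r.+1))) //=.
  exact: dvdn_mulr.
have : q %| gcdn y (primorial r) by rewrite dvdn_gcd qy qP.
  rewrite (eqP cy) dvdn1 => /eqP q1.
by rewrite q1 in pq.
Qed.

Lemma aux1 x p r : p <= x -> x * (p - r) <= (x - r) * p.
Proof. by move=> h; rewrite mulnBr mulnBl leq_sub2l // mulnC leq_mul2r h orbT. Qed.

Lemma aux2 x Q r : x <= Q -> (x - r) * Q <= x * (Q - r).
Proof. by move=> h; rewrite mulnBr mulnBl leq_sub2l // mulnC leq_mul2l h orbT. Qed.

Theorem lemma3p3 (R : realType) (r n k : nat) (lam : R) :
  (0 < r)%N -> (2 <= k)%N -> inF r n -> (k <= omega n)%N ->
  (* lam = lambda_k(r), the unique positive real root of (J_r/r) x^k + k x - (k-1) *)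
  (0 < lam)%R ->
  ((Jr r)%:R / r%:R * lam ^+ k + k%:R * lam - (k - 1)%:R = 0)%R ->
  (lam * ((P k n)%:R - r%:R) < (Q r n (k - 1))%:R)%R.
Proof.
move=> r0 k2 hF hk l0 heq.
have [hB hFm] := hF.
have n0 : 0 < n by case/andP: hB.
case: k k2 hk heq => [|K] // k2 hk heq.
have eK : K.+1 - 1 = K by rewrite subn1.
rewrite eK in heq *.
rewrite ltNge; apply/negP => hQ.
have K0 : 0 < K by [].
set pr := primes n.
set s := size pr.
have hs : K.+1 <= s by [].
set ps := drop (s - K.+1) pr.
set p := P K.+1 n.
have pE : p = nth 0 pr (s - K.+1).
  rewrite /p /P /= nth_rev //; congr nth; lia.
have psE : ps = p :: drop (s - K) pr.
  rewrite /ps (drop_nth 0) -?pE; [congr cons; congr drop; lia | lia].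
have sorted_ps : sorted ltn ps.
  apply: (subseq_sorted ltn_trans _ (sorted_primes n)); exact: drop_subseq.
have allge : forall x, x \in ps -> p <= x.
  move=> x; rewrite psE in_cons => /orP[/eqP -> //|xin].
  move: sorted_ps; rewrite psE /= => /(order_path_min ltn_trans) /allP H.
  exact: ltnW (H x xin).
have sizeps : size ps = K.+1 by rewrite size_drop; lia.
have ps_in : forall x, x \in ps -> [/\ prime x, x %| n & r < x].
  move=> x /mem_drop; rewrite mem_primes => /and3P[px _ xn].
  by split => //; exact: inB_prime hB px xn.
have ups : uniq ps by rewrite drop_uniq // primes_uniq.
set A := \prod_(x <- ps) x.
set C := \prod_(x <- ps) (x - r).
have pps : all prime ps by apply/allP => x /ps_in [].
have Adn : A %| n.
  apply: prod_primes_dvd => //; by apply/allP => x /ps_in [].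
have pin : p \in ps by rewrite psE mem_head.
have rp : r < p by case: (ps_in p pin).
set Qv := Q r n K.
have hcnt : K <= count (goodQ r n) (iota 0 Qv.+1) by exact: Q_spec.
set qs := take K (filter (goodQ r n) (iota 0 Qv.+1)).
have sizeqs : size qs = K by rewrite size_takel // size_filter.
have qs_in : forall q, q \in qs -> [/\ prime q, r < q, ~~ (q %| n) & q <= Qv].
  move=> q /mem_take; rewrite mem_filter mem_iota => /andP[/and3P[pq rq qn] /andP[_ qQ]].
  by split.
have uqs : uniq qs by rewrite take_uniq // filter_uniq // iota_uniq.
have pqs : all prime qs by apply/allP => x /qs_in [].
have rQ : r < Qv.
  have : nth 0 qs 0 \in qs by rewrite mem_nth // sizeqs.
  case/qs_in => _ h _ h'; exact: leq_trans h h'.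
set B := \prod_(x <- qs) x.
set D := \prod_(x <- qs) (x - r).
have B0 : 0 < B by exact: prod_gt0.
have [J0 hJ] := J_spec r.
have [i iJ hi] := hJ (Posz (A %/ B).+1).
set y := (A %/ B).+1 + i.
have cy : coprime y (primorial r).
  by move: hi; rewrite coprimezE -PoszD !absz_nat.
set n' := n %/ A.
have nE : n = n' * A by rewrite divnK.
have n'0 : 0 < n' by move: n0; rewrite nE muln_gt0 => /andP[].
have n'n : n' %| n by rewrite nE dvdn_mulr.
set m := n' * B * y.
have y0 : 0 < y by rewrite /y addSn.
have m0 : 0 < m by rewrite /m !muln_gt0 n'0 B0 y0.
have Bm : inB r m.
  rewrite /inB m0 /=; apply: S_pos => // q pq.
  rewrite !Euclid_dvdM // => /orP[/orP[qn'|qB]|qy].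
  - exact: inB_prime hB pq (dvdn_trans qn' n'n).
  - move: qB; rewrite Euclid_dvd_prod // big_has => /hasP[x xin qx].
    case: (qs_in x xin) => px rx _ _.
    by move: qx; rewrite dvdn_prime2 // => /eqP ->.
  - exact: coprime_prim cy pq qy.
have nm : n < m.
  rewrite nE /m -mulnA ltn_mul2l n'0 /=.
  apply: leq_trans (ltn_ceil A B0) _.
  by rewrite mulnC leq_mul2l leq_addr orbT.
have hlt := hFm m Bm nm.
have h1 : S r m <= y * (D * S r n').
  rewrite /m mulnC; apply: leq_trans (S_le_mul r y0 _) _.
    by rewrite muln_gt0 n'0.
  rewrite leq_mul2l; apply/orP; right; apply: S_prod_le => //.
  - by apply/allP => x /qs_in [].
  - apply/allP => x /qs_in [_ _ xn _]; apply: contra xn => xn'.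
    exact: dvdn_trans xn' n'n.
have h2 : C * S r n' <= S r n.
  rewrite [in S r n]nE; apply: S_prod_ge => //.
  by apply/allP => x /ps_in [].
suff h3 : y * D <= C.
  have := leq_mul h3 (leqnn (S r n')); lia.
have f1 : A * (p - r) ^ K.+1 <= C * p ^ K.+1.
  rewrite -sizeps; apply: listprod_le => x /allge px; exact: aux1.
have f2 : D * Qv ^ K <= B * (Qv - r) ^ K.
  rewrite -sizeqs; apply: listprod_le => x /qs_in [_ rx _ xQ]; exact: aux2.
have f3 : D <= (Qv - r) ^ K.
  have H := @listprod_le qs (fun x => x - r) (fun _ => 1) 1 (Qv - r).
  have H' := H (fun x xin => match qs_in x xin with And4 _ _ _ xQ =>
     eq_ind_r (fun z => z <= _) (eq_ind_r (fun z => _ <= z) (leq_sub2r r xQ) (mul1n _)) (muln1 _) end).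
  by move: H'; rewrite sizeqs exp1n muln1 big1_eq mul1n.
have f4 : (p - r) ^ K.+1 <= C.
  have H := @listprod_le ps (fun _ => 1) (fun x => x - r) (p - r) 1.
  have H' := H (fun x xin => eq_ind_r (fun z => z <= _) (eq_ind_r (fun z => _ <= z) (leq_sub2r r (allge x xin)) (muln1 _)) (mul1n _)).
  by move: H'; rewrite sizeps exp1n muln1 big1_eq mul1n.
have Rnat : forall a b : nat, (a%:R <= b%:R :> R)%R -> a <= b by move=> a b; rewrite ler_nat.
apply: Rnat.
have c1 : (A%:R * (p%:R - r%:R) ^+ K.+1 <= C%:R * p%:R ^+ K.+1 :> R)%R.
  by rewrite -natrB ?(ltnW rp) // -!natrX -!natrM ler_nat.
have c2 : (D%:R * Qv%:R ^+ K <= B%:R * (Qv%:R - r%:R) ^+ K :> R)%R.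
  by rewrite -natrB ?(ltnW rQ) // -!natrX -!natrM ler_nat.
have c3 : (D%:R <= (Qv%:R - r%:R) ^+ K :> R)%R.
  by rewrite -natrB ?(ltnW rQ) // -!natrX ler_nat.
have c4 : ((p%:R - r%:R) ^+ K.+1 <= C%:R :> R)%R.
  by rewrite -natrB ?(ltnW rp) // -!natrX ler_nat.
have hr0 : (0 < r%:R :> R)%R by rewrite ltr0n.
have hrp : (r%:R < p%:R :> R)%R by rewrite ltr_nat.
have hrQ : (r%:R < Qv%:R :> R)%R by rewrite ltr_nat.
have hB0 : (0 < B%:R :> R)%R by rewrite ltr0n.
have key := @core2 R K r%:R p%:R Qv%:R (Jr r)%:R lam A%:R B%:R C%:R D%:R
  hr0 hrp hrQ l0 hB0 (ler0n _ _) (ler0n _ _) (ler0n _ _) heq hQ c1 c2 c3 c4.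
apply: le_trans key; rewrite natrM ler_wpM2r // ?ler0n //.
have yle : y <= A %/ B + Jr r by rewrite /y addSnnS leq_add2l.
apply: le_trans (_ : ((A %/ B)%:R + (Jr r)%:R <= _)%R).
  by rewrite -natrD ler_nat.
rewrite lerD2r ler_pdivlMr // -natrM ler_nat.
exact: leq_divM.
Qed.
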